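(* Let $X$ be a nonnegative random variable with $X\in\mathcal{L}^{1/\theta}$ for some $0<\theta\le1$. Then (i) $\lim_{x\to\infty}e^{\varepsilon x^\theta}\mathbb{P}(X>x)=\infty$ for every $\varepsilon>0$; and (ii) $X\in\mathcal{L}^{1/\eta}$ for all $\eta$ with $1\le1/\eta<1/\theta$.
   Context: Class $\mathcal{L}$: nonnegative $Z$ with $\mathbb{P}(Z>x)>0$ for all $x\ge0$ and $\mathbb{P}(Z>x+y)/\mathbb{P}(Z>x)\to1$ as $x\to\infty$ for some (equivalently all) $y>0$. For $p\ge1$, $X\in\mathcal{L}^p$ means $X\ge0$ and $X^{1/p}\in\mathcal{L}$. *)

(* Defs.v *)
From HB Require Import structures.
From mathcomp Require Import all_boot all_order all_algebra.
From mathcomp Require Import all_classical all_reals all_analysis.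
Set Implicit Arguments. Unset Strict Implicit. Unset Printing Implicit Defensive.
Import Order.TTheory GRing.Theory Num.Theory.
Import numFieldNormedType.Exports.
Local Open Scope classical_set_scope.
Local Open Scope ring_scope.

Notation lt := (@Order.lt _ _).
Definition tailP (d : measure_display) (T : measurableType d) (R : realType)
  (P : probability T R) (Z : T -> R) (x : R) : R :=
  fine (P [set w | x < Z w]).

Definition long_tailed (d : measure_display) (T : measurableType d) (R : realType)
  (P : probability T R) (Z : T -> R) : Prop :=
  (forall w, 0 <= Z w) /\
  (forall x : R, 0 <= x -> lt (0%E) (P [set w | x < Z w])) /\
  (exists2 y : R, 0 < y &
     (tailP P Z (x + y) / tailP P Z x) @[x --> +oo] --> (1 : R)).

Definition long_tailed_p (d : measure_display) (T : measurableType d) (R : realType)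
  (P : probability T R) (p : R) (X : T -> R) : Prop :=
  (forall w, 0 <= X w) /\ long_tailed P (fun w => X w `^ p^-1).

(* Main.v *)
Require Import Defs.
From HB Require Import structures.
From mathcomp Require Import all_boot all_order all_algebra.
From mathcomp Require Import all_classical all_reals all_analysis.
From mathcomp Require Import lra ring measurable_realfun.
Import Order.TTheory GRing.Theory Num.Theory.
Import numFieldNormedType.Exports.
Local Open Scope classical_set_scope.
Local Open Scope ring_scope.

Lemma mtail (d : measure_display) (T : measurableType d) (R : realType)
  (Z : T -> R) : measurable_fun setT Z -> forall a, measurable [set w | a < Z w].
Proof.
move=> mZ a; have := mZ measurableT _ (measurable_itv `]a, +oo[).
rewrite setTI; congr measurable; apply/seteqP; split=> w /=; rewrite in_itv/= andbT //.
Qed.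

Lemma tail_anti (d : measure_display) (T : measurableType d) (R : realType)
  (P : probability T R) (Z : T -> R) : measurable_fun setT Z ->
  forall a b, a <= b -> tailP P Z b <= tailP P Z a.
Proof.
move=> mZ a b ab; rewrite /tailP; apply: fine_le.
- by apply: fin_num_measure; exact: mtail.
- by apply: fin_num_measure; exact: mtail.
apply: le_measure; rewrite ?inE; try exact: mtail.
by move=> w /=; apply: le_lt_trans.
Qed.

Lemma tail_pos (d : measure_display) (T : measurableType d) (R : realType)
  (P : probability T R) (Z : T -> R) a : measurable_fun setT Z ->
  lt 0%E (P [set w | a < Z w]) -> 0 < tailP P Z a.
Proof.
move=> mZ h; rewrite /tailP; apply: fine_gt0; rewrite h /=.
by rewrite ltey_eq fin_num_measure //; exact: mtail.
Qed.


Lemma growth (R : realType) (F : R -> R) (y0 eps : R) :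
 0 < y0 -> 0 < eps ->
 (forall a b, a <= b -> F b <= F a) ->
 (forall u, 0 <= u -> 0 < F u) ->
 (F (x + y0) / F x) @[x --> +oo] --> (1:R) ->
 forall A, exists M, 0 <= M /\ forall u, M <= u -> A <= expR (eps*u) * F u.
Proof.
move=> y00 e0 Fanti Fpos Fcvg A.
set z := eps * y0.
have z0 : 0 < z by rewrite /z mulr_gt0.
set e1 := z / (2 * (1 + z)).
have e10 : 0 < e1 by rewrite /e1 divr_gt0 // mulr_gt0 //; lra.
have e1q : (1 + z) * (1 - e1) = 1 + z / 2.
  by rewrite /e1; field; lra.
have e11 : e1 <= 1.
  by rewrite /e1 ler_pdivrMr ?mulr_gt0 //; lra.
move/cvgrPdist_le: Fcvg => /(_ e1 e10) [M1 [M1r HM1]].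
set M := Num.max M1 0 + 1.
have M0 : 0 < M.
  have : 0 <= Num.max M1 0 by rewrite le_max lexx orbT.
  rewrite /M; lra.
have MM1 : M1 < M.
  have : M1 <= Num.max M1 0 by rewrite le_max lexx.
  rewrite /M; lra.
set H := fun u => expR (eps * u) * F u.
set q := 1 + z / 2.
have z2 : 0 < z / 2 by rewrite divr_gt0.
have q1 : 1 <= q by rewrite /q; lra.
have Hpos : forall u, 0 <= u -> 0 < H u.
  by move=> u u0; rewrite /H mulr_gt0 ?expR_gt0 ?Fpos.
have step : forall u, M <= u -> q * H u <= H (u + y0).
  move=> u Mu; have u0 : 0 <= u by lra.
  have Fu := Fpos u u0.
  have := HM1 u (lt_le_trans MM1 Mu).
  set r := F (u + y0) / F u => hr.
  have Fr : F (u + y0) = r * F u by rewrite /r divfK // gt_eqF.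
  have r1 : 1 - e1 <= r.
    by move: hr; rewrite ler_norml => /andP[]; lra.
  have key : q <= expR z * r.
    rewrite /q -e1q; apply: ler_pM; try lra.
    by have := expR_ge1Dx z; lra.
  rewrite /H Fr mulrDr expRD -/z.
  rewrite [X in _ <= X](_ : _ = (expR (eps * u) * F u) * (expR z * r)); last by ring.
  by rewrite mulrC ler_wpM2l // ltW // mulr_gt0 // expR_gt0.
set m := expR (eps * M) * F (M + y0).
have m0 : 0 < m by rewrite /m mulr_gt0 ?expR_gt0 ?Fpos //; lra.
have base : forall u, M <= u -> u <= M + y0 -> m <= H u.
  move=> u Mu uM; rewrite /m /H; apply: ler_pM.
  - exact: ltW (expR_gt0 _).
  - by apply: ltW; apply: Fpos; lra.
  - by rewrite ler_expR ler_pM2l.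
  - exact: Fanti.
have Q : forall n : nat, forall u, M <= u -> u <= M + n.+1%:R * y0 -> m <= H u.
  elim=> [|n IH] u Mu uM; first by apply: base => //; rewrite mul1r in uM.
  case: (leP u (M + y0)) => [uy|uy]; first exact: base.
  have h1 : m <= H (u - y0).
    apply: IH; first lra.
    by move: uM; rewrite -[n.+2]addn1 natrD mulrDl mul1r; lra.
  have := step (u - y0) ltac:(lra); rewrite subrK.
  have := Hpos (u - y0) ltac:(lra); nra.
have all : forall u, M <= u -> m <= H u.
  move=> u Mu; apply: (Q (Num.bound ((u - M) / y0))) => //.
  have := archi_boundP (x:=(u - M) / y0) ltac:(rewrite divr_ge0 //; lra).
  rewrite ltr_pdivrMr // => h.
  have : (Num.bound ((u - M) / y0))%:R <= (Num.bound ((u - M) / y0)).+1%:R :> R.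
    by rewrite ler_nat.
  nra.
have P' : forall k : nat, forall u, M + k%:R * y0 <= u -> m * (1 + k%:R * (q - 1)) <= H u.
  elim=> [|k IH] u Mu.
    by rewrite mul0r addr0 mulr1; apply: all; move: Mu; rewrite mul0r addr0.
  move: Mu; rewrite -[k.+1]addn1 natrD mulrDl mul1r => Mu.
  have h1 := IH (u - y0) ltac:(lra).
  have ky : 0 <= k%:R * y0 by rewrite mulr_ge0 // ltW.
  have := step (u - y0) ltac:(lra).
  rewrite subrK.
  have kk : 0 <= k%:R :> R by [].
  move=> hs.
  have h2 : q * (m * (1 + k%:R * (q - 1))) <= q * H (u - y0).
    by rewrite ler_wpM2l //; lra.
  have h3 : q * (m * (1 + k%:R * (q - 1))) - m * (1 + (k%:R + 1) * (q - 1))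
          = m * k%:R * ((q - 1) * (q - 1)) by ring.
  have h4 : 0 <= m * k%:R * ((q - 1) * (q - 1)).
    by apply: mulr_ge0; apply: mulr_ge0 => //; lra.
  lra.
set k := Num.bound (`|A| / (m * (q - 1))).
have qq : 0 < q - 1 by rewrite /q; lra.
have hk := archi_boundP (x := `|A| / (m * (q - 1))) ltac:(by rewrite divr_ge0 // ltW // mulr_gt0).
rewrite ltr_pdivrMr ?mulr_gt0 // -/k in hk.
exists (M + k%:R * y0); split.
  have : 0 <= k%:R * y0 by rewrite mulr_ge0 // ltW.
  lra.
move=> u Mu; apply: le_trans (P' k u Mu).
have e : m * (1 + k%:R * (q - 1)) = m + k%:R * (m * (q - 1)) by ring.
rewrite e; have := ler_norm A; lra.
- exact: expR_gt0.
- apply: Fpos; lra.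
Qed.
Lemma powR_ltE (R : realType) (p x y : R) : 0 < p -> 0 <= x -> 0 <= y ->
  (x `^ p < y `^ p) = (x < y).
Proof.
move=> p0 x0 y0; apply/idP/idP => h; last by apply: gt0_ltr_powR; rewrite ?nnegrE.
rewrite ltNge; apply/negP => yx.
have := ge0_ler_powR (ltW p0) (y0 : y \in Num.nneg) (x0 : x \in Num.nneg) yx.
by rewrite leNgt h.
Qed.

Lemma powR_le (R : realType) (p x y : R) : 0 <= p -> 0 <= x -> x <= y ->
  x `^ p <= y `^ p.
Proof.
move=> p0 x0 xy; apply: (ge0_ler_powR p0) => //; rewrite nnegrE //; exact: le_trans xy.
Qed.

Lemma powR_invK (R : realType) (p x : R) : 0 < p -> 0 <= x -> (x `^ p^-1) `^ p = x.
Proof.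
by move=> p0 x0; rewrite -powRrM mulVf ?gt_eqF // powRr1.
Qed.

Lemma powR_id_le (R : realType) (b a : R) : 0 <= a <= 1 -> b <= 1 -> a <= a `^ b.
Proof.
move=> /andP[a0 a1] b1; have [->|a0'] := eqVneq a 0; first exact: powR_ge0.
apply: ger1_powR => //; rewrite a1 andbT lt_neqAle eq_sym a0' a0 //.
Qed.

Lemma powR_subadd (R : realType) (b x y : R) : 0 < b -> b <= 1 -> 0 <= x -> 0 <= y ->
  (x + y) `^ b <= x `^ b + y `^ b.
Proof.
move=> b0 b1 x0 y0.
have [s0|s0] := eqVneq (x + y) 0.
  have -> : x = 0 by lra.
  have -> : y = 0 by lra.
  by rewrite addr0 powR0 ?gt_eqF // addr0.
have [s sE] : exists s : R, s = x + y by exists (x + y).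
rewrite -sE in s0 *.
have sp : 0 < s by rewrite lt_neqAle eq_sym s0 /=; lra.
have hx : x / s <= (x / s) `^ b.
  apply: powR_id_le => //; apply/andP; split; first by rewrite divr_ge0 // ltW.
  by rewrite ler_pdivrMr // mul1r; lra.
have hy : y / s <= (y / s) `^ b.
  apply: powR_id_le => //; apply/andP; split; first by rewrite divr_ge0 // ltW.
  by rewrite ler_pdivrMr // mul1r; lra.
have si : 0 <= s^-1 by rewrite invr_ge0 ltW.
have st : s `^ b * s^-1 `^ b = 1.
  by rewrite -(powRM _ (ltW sp) si) divff // powR1.
have hsum : x `^ b + y `^ b = s `^ b * ((x / s) `^ b + (y / s) `^ b).
  rewrite !(powRM _ _ si) //.
  transitivity ((x `^ b + y `^ b) * (s `^ b * s^-1 `^ b)); first by rewrite st mulr1.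
  ring.
have e1 : x / s + y / s = 1 by rewrite -mulrDl -sE divff.
rewrite hsum -[X in X <= _]mulr1 ler_wpM2l ?powR_ge0 //; lra.
Qed.

Lemma ratio2 (R : realType) (F : R -> R) (y0 beta : R) :
  0 < y0 -> 0 < beta -> beta <= 1 ->
  (forall a b, a <= b -> F b <= F a) ->
  (forall u, 0 <= u -> 0 < F u) ->
  (F (x + y0) / F x) @[x --> +oo] --> (1:R) ->
  (F ((x + y0 `^ beta^-1) `^ beta) / F (x `^ beta)) @[x --> +oo] --> (1:R).
Proof.
move=> y00 b0 b1 Fanti Fpos /cvgrPdist_le Fcvg.
apply/cvgrPdist_le => e e0.
have [M1 [M1r HM]] := Fcvg e e0.
set M0 := Num.max M1 0.
have M00 : 0 <= M0 by rewrite /M0 le_max lexx orbT.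
have M01 : M1 <= M0 by rewrite /M0 le_max lexx.
exists (M0 `^ beta^-1); split; first exact: num_real.
move=> x hx.
have x0 : 0 <= x by apply: le_trans (ltW hx); exact: powR_ge0.
set c := y0 `^ beta^-1.
have c0 : 0 <= c by exact: powR_ge0.
set u := x `^ beta.
set v := (x + c) `^ beta.
have u0 : 0 <= u by exact: powR_ge0.
have uM : M0 < u.
  rewrite /u -[X in X < _](@powR_invK R _ _ b0 M00) powR_ltE //; exact: powR_ge0.
have vu : u <= v by apply: powR_le; [exact: ltW|by []|lra].
have vu2 : v <= u + y0.
  have := @powR_subadd R _ _ _ b0 b1 x0 c0; rewrite /c powR_invK //; exact: ltW.
have Fu := Fpos u u0.
have F1 : F v <= F u by exact: Fanti.
have F2 : F (u + y0) <= F v by exact: Fanti.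
have := HM u (le_lt_trans M01 uM).
rewrite !ler_norml => /andP[h1 h2]; apply/andP; split.
- have : F v / F u <= 1 by rewrite ler_pdivrMr // mul1r.
  lra.
- have : F (u + y0) / F u <= F v / F u by rewrite ler_pM2r // invr_gt0.
  lra.
Qed.

Lemma set_pow (d : measure_display) (T : measurableType d) (R : realType)
  (X : T -> R) (p a : R) : 0 < p -> 0 <= a -> (forall w, 0 <= X w) ->
  [set w | a < X w] = [set w | a `^ p < X w `^ p].
Proof. by move=> p0 a0 X0; apply/seteqP; split => w /=; rewrite powR_ltE. Qed.

Theorem lemmaA1 (d : measure_display) (T : measurableType d) (R : realType)
  (P : probability T R) (X : {RV P >-> R}) (theta : R) :
  (forall w, 0 <= X w) ->
  0 < theta -> theta <= 1 ->
  long_tailed_p P theta^-1 X ->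
  (forall eps : R, 0 < eps ->
     (expR (eps * x `^ theta) * tailP P X x) @[x --> +oo] --> +oo) /\
  (forall eta : R, 1 <= eta^-1 -> eta^-1 < theta^-1 ->
     long_tailed_p P eta^-1 X).
Proof.
move=> X0 th0 th1 [_]; rewrite invrK => -[_ [Ypos [y0 y00 Ycvg]]].
set Y := fun w => X w `^ theta.
have mY : measurable_fun setT Y.
  exact: (measurableT_comp (measurable_powR theta) (measurable_funP X)).
set F := tailP P Y.
have Fanti : forall a b, a <= b -> F b <= F a by exact: tail_anti.
have Fpos : forall u, 0 <= u -> 0 < F u.
  by move=> u u0; apply: tail_pos => //; exact: Ypos.
split.
  move=> eps e0; apply/cvgryPge => A.
  have [M [M0 HM]] := @growth R F y0 eps y00 e0 Fanti Fpos Ycvg A.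
  exists (M `^ theta^-1); split; first exact: num_real.
  move=> x hx.
  have x0 : 0 <= x by apply: le_trans (ltW hx); exact: powR_ge0.
  rewrite /tailP (@set_pow _ _ _ X theta x) //.
  apply: HM; apply: ltW.
  by rewrite -[X in X < _](@powR_invK R _ _ th0 M0) powR_ltE // powR_ge0.
move=> eta h1 h2.
have eta0 : 0 < eta by rewrite -invr_gt0; apply: lt_le_trans h1.
have eta1 : eta <= 1 by rewrite -invf_ge1.
have the : theta < eta by move: h2; rewrite ltf_pV2 // ?posrE.
split; first exact: X0.
rewrite invrK.
set beta := theta / eta.
have b0 : 0 < beta by rewrite divr_gt0.
have b1 : beta <= 1 by rewrite ler_pdivrMr // mul1r; exact: ltW.
have eb : eta * beta = theta by rewrite /beta mulrC divfK // gt_eqF.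
have setE : forall x, 0 <= x ->
    [set w | x < X w `^ eta] = [set w | x `^ beta < Y w].
  move=> x x0; apply/seteqP; split => w /=;
    by rewrite /Y -eb powRrM (@powR_ltE R _ _ _ b0 x0 (powR_ge0 _ _)).
have tE : forall x, 0 <= x -> tailP P (fun w => X w `^ eta) x = F (x `^ beta).
  by move=> x x0; rewrite /tailP (setE x x0).
split; first by move=> w; exact: powR_ge0.
split.
  by move=> x x0; rewrite (setE x x0); apply: Ypos; exact: powR_ge0.
exists (y0 `^ beta^-1); first exact: powR_gt0.
have R2 := @ratio2 R F y0 beta y00 b0 b1 Fanti Fpos Ycvg.
apply/cvgrPdist_le => e e0.
move/cvgrPdist_le: R2 => /(_ e e0).
apply: filterS2 (nbhs_pinfty_ge (@real0 _)) => x x0.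
by rewrite tE ?tE //; apply: addr_ge0 => //; exact: powR_ge0.
Qed.
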